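(* There is an absolute constant $C>0$ such that the following holds. Let $U^*,S,p_{ijk},\widehat p_{ijk},\mathcal{W}_{ijk},\delta_{ijk}$ be as in the context, and let $U\in\mathbb{R}^{n\times r}$ be fixed (independent of $\delta$) with unit-norm columns and $|U_{il}|\le2\|(U^* )^i\|$ for all $i,l$. Let $\gamma\in(0,1]$, $i\in[n]$, $q\in[r]$ and $b\in\mathbb{R}^n$ be fixed. If $m\ge\frac{C}{\gamma^2}n\log(n)S^2$, then with probability at least $1-n^{-10}$, $$\Big|\sum_{j,k}\delta_{ijk}\mathcal{W}_{ijk}U^*_{iq}U_{jq}U^*_{jq}U_{kq}b_k-U^*_{iq}\langle U_q,U^*_q\rangle\langle U_q,b\rangle\Big|\le\gamma\|b\|.$$
   Context: $U^*\in\mathbb{R}^{n\times r}$ has orthonormal columns $U^*_l$ and rows $(U^* )^i$; $S=\sum_i\|(U^* )^i\|^{3/2}$; $p_{ijk}=\frac{\|(U^* )^i\|^{3/2}\|(U^* )^j\|^{3/2}+\|(U^* )^j\|^{3/2}\|(U^* )^k\|^{3/2}+\|(U^* )^k\|^{3/2}\|(U^* )^i\|^{3/2}}{3nS^2}$; $\widehat p_{ijk}=\min\{mp_{ijk},1\}$; $\mathcal{W}_{ijk}=1/\widehat p_{ijk}$ if $\widehat p_{ijk}>0$, else $0$; $\delta_{ijk}$ are independent Bernoulli$(\widehat p_{ijk})$ random variables. *)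

(* Defs.v *)
From Stdlib Require Import Reals List Arith.
Open Scope R_scope.

Fixpoint rsum (n : nat) (f : nat -> R) : R :=
  match n with
  | O => 0
  | S n' => rsum n' f + f n'
  end.

(* Matrices in R^{n x r} as functions of (row, column), indices 0-based. *)
Definition mat := nat -> nat -> R.

Definition rownorm (r : nat) (A : mat) (i : nat) : R :=
  sqrt (rsum r (fun l => (A i l)^2)).

(* ||A^i||^{3/2}, written as (sqrt ||A^i||)^3 (valid also at 0) *)
Definition w32 (r : nat) (A : mat) (i : nat) : R := (sqrt (rownorm r A i))^3.

Definition Sconst (n r : nat) (A : mat) : R := rsum n (fun i => w32 r A i).

Definition p_ijk (n r : nat) (A : mat) (i j k : nat) : R :=
  (w32 r A i * w32 r A j + w32 r A j * w32 r A k + w32 r A k * w32 r A i)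
  / (3 * INR n * (Sconst n r A)^2).

Definition phat (n r : nat) (A : mat) (m : R) (i j k : nat) : R :=
  Rmin (m * p_ijk n r A i j k) 1.

Definition Wt (n r : nat) (A : mat) (m : R) (i j k : nat) : R :=
  if Rlt_dec 0 (phat n r A m i j k) then / phat n r A m i j k else 0.

Definition orthonormal_cols (n r : nat) (A : mat) : Prop :=
  forall l l', (l < r)%nat -> (l' < r)%nat ->
    rsum n (fun i => A i l * A i l') = if Nat.eqb l l' then 1 else 0.

Definition unit_cols (n r : nat) (A : mat) : Prop :=
  forall l, (l < r)%nat -> rsum n (fun i => (A i l)^2) = 1.

Definition vnorm (n : nat) (b : nat -> R) : R := sqrt (rsum n (fun k => (b k)^2)).

Definition config := nat -> nat -> nat -> bool.

Definition upd (d : config) (c : nat * nat * nat) (v : bool) : config :=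
  fun a b e => let '(x, y, z) := c in
    if (Nat.eqb a x && Nat.eqb b y && Nat.eqb e z)%bool then v else d a b e.

(* Expectation of f under independent delta_c ~ Bernoulli(pr c), c in cs;
   coordinates not in cs are fixed by d. *)
Fixpoint bern_expect (pr : nat -> nat -> nat -> R) (cs : list (nat * nat * nat))
    (f : config -> R) (d : config) : R :=
  match cs with
  | nil => f d
  | c :: cs' =>
      let '(x, y, z) := c in
      pr x y z * bern_expect pr cs' f (upd d c true)
      + (1 - pr x y z) * bern_expect pr cs' f (upd d c false)
  end.

Definition coords (n : nat) : list (nat * nat * nat) :=
  list_prod (list_prod (seq 0 n) (seq 0 n)) (seq 0 n).

Definition bern_prob_le (n : nat) (pr : nat -> nat -> nat -> R)
    (X : config -> R) (t : R) : R :=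
  bern_expect pr (coords n)
    (fun d => if Rle_dec (X d) t then 1 else 0) (fun _ _ _ => false).

Definition b2R (v : bool) : R := if v then 1 else 0.

(* Main.v *)
Require Import Defs.
From Stdlib Require Import Reals Lra Lia List Arith.
Open Scope R_scope.

Fixpoint lprod {A : Type} (l : list A) (f : A -> R) : R :=
  match l with nil => 1 | c :: l' => f c * lprod l' f end.

Lemma lprod_app {A} (l1 l2 : list A) f : lprod (l1 ++ l2) f = lprod l1 f * lprod l2 f.
Proof. induction l1; simpl; [ring| rewrite IHl1; ring]. Qed.

Lemma lprod_ext {A} (l : list A) f g : (forall a, In a l -> f a = g a) -> lprod l f = lprod l g.
Proof. induction l; simpl; intros H; auto. rewrite H by auto; rewrite IHl; auto. Qed.

Lemma lprod_map {A B} (l : list A) (h : A -> B) f : lprod (map h l) f = lprod l (fun a => f (h a)).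
Proof. induction l; simpl; auto. rewrite IHl; auto. Qed.

Lemma lprod_list_prod {A B} (l1 : list A) (l2 : list B) f :
  lprod (list_prod l1 l2) f = lprod l1 (fun a => lprod l2 (fun b => f (a, b))).
Proof. induction l1; simpl; auto. rewrite lprod_app, lprod_map, IHl1; auto. Qed.

Lemma lprod_one {A} (l : list A) : lprod l (fun _ => 1) = 1.
Proof. induction l; simpl; auto. rewrite IHl; ring. Qed.

Lemma lprod_seq_exp n f : lprod (seq 0 n) (fun x => exp (f x)) = exp (rsum n f).
Proof. induction n. simpl. rewrite exp_0; auto.
 rewrite seq_S, lprod_app, IHn. simpl rsum. rewrite exp_plus. simpl. ring. Qed.

Lemma lprod_seq_single n i K : (i < n)%nat ->
  lprod (seq 0 n) (fun x => if Nat.eqb x i then K else 1) = K.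
Proof.
  assert (H0 : forall n, (n <= i)%nat -> lprod (seq 0 n) (fun x => if Nat.eqb x i then K else 1) = 1).
  { induction n0; intros. simpl; auto. rewrite seq_S, lprod_app, IHn0 by lia. simpl.
    replace (Nat.eqb n0 i) with false by (symmetry; apply Nat.eqb_neq; lia). ring. }
  induction n; intros; [lia|]. rewrite seq_S, lprod_app. cbn [lprod plus].
  destruct (Nat.eq_dec i n).
  - subst. rewrite H0 by lia. rewrite Nat.eqb_refl. ring.
  - rewrite IHn by lia. replace (Nat.eqb n i) with false by (symmetry; apply Nat.eqb_neq; lia). ring.
Qed.

Lemma lprod_le {A} (l : list A) f g : (forall a, In a l -> 0 <= f a <= g a) -> lprod l f <= lprod l g.
Proof.
  assert (Hp : forall l, (forall a : A, In a l -> 0 <= f a <= g a) -> 0 <= lprod l f).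
  { induction l0; simpl; intros; [lra|]. apply Rmult_le_pos; [apply H; auto| apply IHl0; auto]. }
  induction l; simpl; intros H; [lra|]. apply Rmult_le_compat.
  apply H; auto. apply Hp; auto. apply H; auto. apply IHl; auto.
Qed.

Lemma coords_rep n i (G : nat -> nat -> R) : (i < n)%nat ->
  lprod (coords n) (fun c : nat * nat * nat => let '(x, y, z) := c in
       if Nat.eqb x i then exp (G y z) else 1)
  = exp (rsum n (fun y => rsum n (fun z => G y z))).
Proof.
  intros Hi. unfold coords. rewrite lprod_list_prod, lprod_list_prod.
  rewrite <- (lprod_seq_single n i (exp (rsum n (fun y => rsum n (fun z => G y z))))) by auto.
  apply lprod_ext. intros x _. destruct (Nat.eqb x i).
  - rewrite <- lprod_seq_exp. apply lprod_ext. intros y _. rewrite <- lprod_seq_exp. auto.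
  - rewrite <- (lprod_one (seq 0 n)) at 1. apply lprod_ext. intros y _. apply lprod_one.
Qed.

Lemma NoDup_list_prod {A B} (l1 : list A) (l2 : list B) : NoDup l1 -> NoDup l2 -> NoDup (list_prod l1 l2).
Proof.
  intros H1 H2. induction H1; simpl. constructor.
  apply NoDup_app; auto.
  - clear IHNoDup H1 H. induction H2; simpl; constructor; auto.
    intros Hin. apply in_map_iff in Hin. destruct Hin as [y [Hy Hy']]. inversion Hy; subst; auto.
  - intros a Ha Hb. apply in_map_iff in Ha. destruct Ha as [y [Hy _]]. subst.
    apply in_prod_iff in Hb. tauto.
Qed.

Lemma coords_NoDup n : NoDup (coords n).
Proof. unfold coords. repeat apply NoDup_list_prod; apply seq_NoDup. Qed.

Definition app (d : config) (c : nat * nat * nat) : bool := let '(x, y, z) := c in d x y z.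

Lemma app_upd_same d c v : app (upd d c v) c = v.
Proof. destruct c as [[x y] z]. unfold app, upd. rewrite !Nat.eqb_refl. auto. Qed.

Lemma app_upd_other d c c' v : c' <> c -> app (upd d c v) c' = app d c'.
Proof. destruct c as [[x y] z], c' as [[x' y'] z']. unfold app, upd. intros H.
  destruct (Nat.eqb x' x) eqn:E1; destruct (Nat.eqb y' y) eqn:E2; destruct (Nat.eqb z' z) eqn:E3; simpl; auto.
  apply Nat.eqb_eq in E1, E2, E3. subst. congruence. Qed.

Lemma bern_ext pr cs f g d : (forall d, f d = g d) -> bern_expect pr cs f d = bern_expect pr cs g d.
Proof. revert d. induction cs as [|[[x y] z] cs IH]; simpl; intros; auto. rewrite !IH; auto. Qed.

Lemma bern_lin pr cs k a b f g d :
  bern_expect pr cs (fun d => k + a * f d + b * g d) d =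
  k + a * bern_expect pr cs f d + b * bern_expect pr cs g d.
Proof. revert d. induction cs as [|[[x y] z] cs IH]; simpl; intros; auto. rewrite !IH; ring. Qed.

Lemma bern_const pr cs k d : bern_expect pr cs (fun _ => k) d = k.
Proof. revert d. induction cs as [|[[x y] z] cs IH]; simpl; intros; auto. rewrite !IH; ring. Qed.

Lemma bern_mono pr cs f g d : (forall x y z, 0 <= pr x y z <= 1) ->
  (forall d, f d <= g d) -> bern_expect pr cs f d <= bern_expect pr cs g d.
Proof. intros Hp. revert d. induction cs as [|[[x y] z] cs IH]; simpl; intros; auto.
  specialize (Hp x y z). pose proof (IH (upd d (x,y,z) true) H). pose proof (IH (upd d (x,y,z) false) H).
  nra. Qed.

Lemma bern_prod pr cs (h : nat * nat * nat -> bool -> R) (A : config -> R) d :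
  NoDup cs -> (forall c d v, In c cs -> A (upd d c v) = A d) ->
  bern_expect pr cs (fun d => A d * lprod cs (fun c => h c (app d c))) d =
  A d * lprod cs (fun c => let '(x, y, z) := c in pr x y z * h c true + (1 - pr x y z) * h c false).
Proof.
  revert A d. induction cs as [|c cs IH]; intros A d Hnd HA.
  - simpl. auto.
  - inversion Hnd; subst. destruct c as [[x y] z]. simpl.
    set (A' := fun d => A d * h (x, y, z) (app d (x, y, z))).
    assert (E : forall v, bern_expect pr cs
      (fun d0 => A d0 * (h (x, y, z) (d0 x y z) * lprod cs (fun c => h c (app d0 c)))) (upd d (x, y, z) v)
      = A' (upd d (x,y,z) v) * lprod cs (fun c => let '(x, y, z) := c in pr x y z * h c true + (1 - pr x y z) * h c false)).
    { intros v. rewrite <- IH; auto.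
      - apply bern_ext. intros d0. unfold A'. simpl. ring.
      - intros c d0 v' Hc. unfold A'. rewrite HA by (right; auto).
        rewrite app_upd_other; auto. intro; subst; auto. }
    rewrite !E. unfold A'. rewrite !app_upd_same, !HA by (left; auto). ring.
Qed.

Lemma Rabs_le_inv' x a : Rabs x <= a -> -a <= x <= a.
Proof. unfold Rabs; destruct Rcase_abs; lra. Qed.

Lemma exp_quad x : Rabs x <= 1/2 -> exp x <= 1 + x + 2 * x^2.
Proof.
  intros H. apply Rabs_le_inv' in H.
  pose proof (exp_ineq1_le (- x)) as H1.
  assert (Hp : 0 < exp x) by apply exp_pos.
  assert (E : exp x * exp (- x) = 1) by (rewrite <- exp_plus; replace (x + - x) with 0 by ring; apply exp_0).
  assert (exp x * (1 - x) <= 1) by nra.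
  assert (1 <= (1 - x) * (1 + x + 2 * x^2)) by nra.
  nra.
Qed.

Lemma coord_bound (ph W c s : R) : 0 <= ph <= 1 -> W = (if Rlt_dec 0 ph then /ph else 0) ->
  (ph = 0 -> c = 0) -> (0 < ph < 1 -> Rabs (s*c) <= ph/2) ->
  ph * exp (s * ((b2R true * W - 1) * c)) + (1 - ph) * exp (s * ((b2R false * W - 1) * c))
  <= exp (2 * s^2 * (c^2 * W * (1 - ph))).
Proof.
  intros Hph HW Hc0 Hmax. unfold b2R. subst W.
  destruct (Rlt_dec 0 ph) as [Hp|Hp].
  - destruct (Req_dec ph 1) as [E1|E1].
    + subst. replace (s * ((1 * / 1 - 1) * c)) with 0 by (field).
      replace (2 * s ^ 2 * (c ^ 2 * / 1 * (1 - 1))) with 0 by ring. rewrite exp_0. lra.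
    + assert (Hlt : 0 < ph < 1) by lra. specialize (Hmax Hlt).
      set (w := / ph). assert (Hw : ph * w = 1) by (unfold w; field; lra).
      assert (Hw0 : 0 < w) by (unfold w; apply Rinv_0_lt_compat; lra).
      replace (s * ((1 * w - 1) * c)) with ((s*c) * w * (1 - ph)) by (unfold w; field; lra).
      replace (s * ((0 * w - 1) * c)) with (- (s*c)) by ring.
      replace (2 * s ^ 2 * (c ^ 2 * w * (1 - ph))) with (2 * (s*c)^2 * w * (1 - ph)) by ring.
      set (a := s * c) in *.
      apply Rabs_le_inv' in Hmax.
      assert (Haw : -1/2 <= a * w <= 1/2) by nra.
      assert (B1 : exp (a * w * (1 - ph)) <= 1 + a * w * (1 - ph) + 2 * (a * w * (1 - ph))^2).
      { apply exp_quad. apply Rabs_le. nra. }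
      assert (B2 : exp (- a) <= 1 + - a + 2 * (- a)^2).
      { apply exp_quad. apply Rabs_le. nra. }
      pose proof (exp_ineq1_le (2 * a ^ 2 * w * (1 - ph))).
      assert (Eq : ph * (1 + a * w * (1 - ph) + 2 * (a * w * (1 - ph))^2) + (1 - ph) * (1 + - a + 2 * (- a)^2)
                = 1 + 2 * a ^ 2 * w * (1 - ph)).
      { unfold w; field; lra. }
      nra.
  - assert (H : ph = 0) by lra. rewrite (Hc0 H), H.
    replace (s * ((1 * 0 - 1) * 0)) with 0 by ring.
    replace (s * ((0 * 0 - 1) * 0)) with 0 by ring.
    replace (2 * s ^ 2 * (0 ^ 2 * 0 * (1 - 0))) with 0 by ring. rewrite exp_0. lra.
Qed.

Lemma rsum_ext n f g : (forall x, (x < n)%nat -> f x = g x) -> rsum n f = rsum n g.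
Proof. induction n; simpl; intros; auto. rewrite IHn, H; auto. Qed.
Lemma rsum_le n f g : (forall x, (x < n)%nat -> f x <= g x) -> rsum n f <= rsum n g.
Proof. induction n; simpl; intros; [lra|]. pose proof (H n (Nat.lt_succ_diag_r n)). pose proof (IHn (fun x Hx => H x (Nat.lt_lt_succ_r _ _ Hx))). lra. Qed.
Lemma rsum_nonneg n f : (forall x, (x < n)%nat -> 0 <= f x) -> 0 <= rsum n f.
Proof. intros. replace 0 with (rsum n (fun _ => 0)). apply rsum_le; auto. induction n; simpl; auto. rewrite IHn; auto; lra. Qed.
Lemma term_le_rsum n f l : (forall x, (x < n)%nat -> 0 <= f x) -> (l < n)%nat -> f l <= rsum n f.
Proof. induction n; intros H Hl; [lia|]. simpl.
  assert (0 <= rsum n f) by (apply rsum_nonneg; auto).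
  destruct (Nat.eq_dec l n). subst; lra. pose proof (IHn (fun x Hx => H x (Nat.lt_lt_succ_r _ _ Hx))).
  assert (f l <= rsum n f) by (apply H1; lia). pose proof (H n (Nat.lt_succ_diag_r n)). lra. Qed.
Lemma rsum_scal n k f : k * rsum n f = rsum n (fun x => k * f x).
Proof. induction n; simpl; [ring|]. rewrite <- IHn; ring. Qed.
Lemma rsum_minus n f g : rsum n f - rsum n g = rsum n (fun x => f x - g x).
Proof. induction n; simpl; [ring|]. rewrite <- IHn; ring. Qed.
Lemma rsum_zero n : rsum n (fun _ => 0) = 0.
Proof. induction n; simpl; auto. rewrite IHn; ring. Qed.
Lemma rsum_exists n f : rsum n f <> 0 -> exists x, (x < n)%nat /\ f x <> 0.
Proof. induction n; simpl; intros H. lra. destruct (Req_dec (f n) 0).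
  destruct IHn as [x [Hx Hf]]. lra. exists x; split; auto. exists n; split; auto. Qed.

Lemma expmom (n i : nat) pr (Y : nat -> nat -> bool -> R) (Q : nat -> nat -> R) s :
  (i < n)%nat -> (forall x y z, 0 <= pr x y z <= 1) ->
  (forall j k, (j < n)%nat -> (k < n)%nat ->
     pr i j k * exp (s * Y j k true) + (1 - pr i j k) * exp (s * Y j k false) <= exp (Q j k)) ->
  bern_expect pr (coords n) (fun d => exp (s * rsum n (fun j => rsum n (fun k => Y j k (d i j k)))))
     (fun _ _ _ => false) <= exp (rsum n (fun j => rsum n (fun k => Q j k))).
Proof.
  intros Hi Hp HQ.
  set (h := fun (c : nat * nat * nat) (v : bool) => let '(x, y, z) := c in
         if Nat.eqb x i then exp (s * Y y z v) else 1).
  rewrite (bern_ext _ _ _ (fun d => 1 * lprod (coords n) (fun c => h c (app d c)))).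
  2:{ intros d. rewrite Rmult_1_l. rewrite rsum_scal.
      rewrite (rsum_ext n _ (fun j => rsum n (fun k => s * Y j k (d i j k)))) by (intros; apply rsum_scal).
      rewrite <- (coords_rep n i (fun y z => s * Y y z (d i y z))) by auto.
      apply lprod_ext. intros [[x y] z] _. unfold h, app.
      destruct (Nat.eqb x i) eqn:E; auto. apply Nat.eqb_eq in E; subst; auto. }
  rewrite bern_prod. 2: apply coords_NoDup. 2: auto. rewrite Rmult_1_l.
  rewrite <- (coords_rep n i Q) by auto.
  apply lprod_le. intros [[x y] z] Hin. unfold coords in Hin.
  apply in_prod_iff in Hin. destruct Hin as [Hin Hz]. apply in_prod_iff in Hin. destruct Hin as [Hx Hy].
  apply in_seq in Hy, Hz. unfold h. specialize (Hp x y z).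
  destruct (Nat.eqb x i) eqn:E.
  - apply Nat.eqb_eq in E; subst. split.
    + pose proof (exp_pos (s * Y y z true)); pose proof (exp_pos (s * Y y z false)). nra.
    + apply HQ; lia.
  - lra.
Qed.

Lemma abs_le_one_of_sq x : x * x <= 1 -> Rabs x <= 1.
Proof. intros. pose proof (pow2_abs x). pose proof (Rabs_pos x). nra. Qed.

Lemma abs_le_sqrt_sum n f l : (l < n)%nat -> (forall x, (x < n)%nat -> 0 <= f x ^ 2) ->
  Rabs (f l) <= sqrt (rsum n (fun x => f x ^ 2)).
Proof. intros Hl Hn. rewrite <- sqrt_Rsqr_abs. apply sqrt_le_1_alt. unfold Rsqr.
  replace (f l * f l) with (f l ^ 2) by ring. apply (term_le_rsum n (fun x => f x ^ 2)); auto. Qed.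

Lemma AMGM3 u v t : 0 <= u -> 0 <= v -> 0 <= t ->
  u^2 * v^2 * t^2 <= u^3 * v^3 + v^3 * t^3 + t^3 * u^3.
Proof.
  intros Hu Hv Ht. set (P := u^2 * v^2 * t^2).
  assert (H1 : 0 <= u^3*v^3) by (apply Rmult_le_pos; apply pow_le; auto).
  assert (H2 : 0 <= v^3*t^3) by (apply Rmult_le_pos; apply pow_le; auto).
  assert (H3 : 0 <= t^3*u^3) by (apply Rmult_le_pos; apply pow_le; auto).
  destruct (Rle_dec P (u^3 * v^3 + v^3 * t^3 + t^3 * u^3)) as [|Hn]; auto.
  exfalso. apply Rnot_le_lt in Hn.
  assert (A1 : u^3*v^3 < P) by lra. assert (A2 : v^3*t^3 < P) by lra. assert (A3 : t^3*u^3 < P) by lra.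
  assert (A4 : (u^3*v^3)*(v^3*t^3) < P*P) by (apply Rmult_le_0_lt_compat; auto).
  assert (A5 : (u^3*v^3)*(v^3*t^3)*(t^3*u^3) < P*P*P).
  { apply Rmult_le_0_lt_compat; auto. apply Rmult_le_pos; auto. }
  assert (E : (u^3*v^3)*(v^3*t^3)*(t^3*u^3) = P*P*P) by (unfold P; ring). lra.
Qed.

Lemma exp_le' x y : x <= y -> exp x <= exp y.
Proof. intros [H|H]. left; apply exp_increasing; auto. subst; lra. Qed.

Lemma rsum_mul n f g : rsum n f * rsum n g = rsum n (fun j => rsum n (fun k => f j * g k)).
Proof. rewrite Rmult_comm, rsum_scal. apply rsum_ext. intros. rewrite Rmult_comm, rsum_scal. auto. Qed.

Theorem mainTheorem6 :
  exists C : R, C > 0 /\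
  forall (n r : nat) (Ustar U : mat) (m gamma : R) (i q : nat) (b : nat -> R),
    orthonormal_cols n r Ustar ->
    unit_cols n r U ->
    (forall a l, (a < n)%nat -> (l < r)%nat -> Rabs (U a l) <= 2 * rownorm r Ustar a) ->
    0 < gamma <= 1 ->
    (i < n)%nat -> (q < r)%nat ->
    m >= C / gamma^2 * INR n * ln (INR n) * (Sconst n r Ustar)^2 ->
    bern_prob_le n (phat n r Ustar m)
      (fun d => Rabs (rsum n (fun j => rsum n (fun k =>
                   b2R (d i j k) * Wt n r Ustar m i j k
                   * Ustar i q * U j q * Ustar j q * U k q * b k))
               - Ustar i q * rsum n (fun a => U a q * Ustar a q)
                           * rsum n (fun a => U a q * b a)))
      (gamma * vnorm n b)
    >= 1 - / (INR n)^10.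
Proof.
  exists 1056. split; [lra|].
  intros n r Ustar U m gamma i q b Horth Hunit HUb Hg Hi Hq Hm.
  set (a := rownorm r Ustar) in *.
  set (B := vnorm n b).
  set (S := Sconst n r Ustar) in *.
  set (L := ln (INR n)) in *.
  set (c := fun j k => Ustar i q * U j q * Ustar j q * U k q * b k).
  set (ph := phat n r Ustar m).
  set (N := fun j k => w32 r Ustar i * w32 r Ustar j + w32 r Ustar j * w32 r Ustar k
                      + w32 r Ustar k * w32 r Ustar i).
  assert (Fa0 : forall x, 0 <= a x) by (intros; apply sqrt_pos).
  assert (Fa1 : forall x, Rabs (Ustar x q) <= a x).
  { intros x. unfold a, rownorm. apply (abs_le_sqrt_sum r (fun l => Ustar x l)); auto.
    intros; apply pow2_ge_0. }
  assert (Fcol : rsum n (fun x => Ustar x q * Ustar x q) = 1).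
  { rewrite (Horth q q Hq Hq), Nat.eqb_refl. auto. }
  assert (Fs1 : forall x, (x < n)%nat -> Rabs (Ustar x q) <= 1).
  { intros x Hx. apply abs_le_one_of_sq. rewrite <- Fcol.
    apply (term_le_rsum n (fun x => Ustar x q * Ustar x q)); auto. intros; nra. }
  assert (Fu1 : forall x, (x < n)%nat -> Rabs (U x q) <= 1).
  { intros x Hx. apply abs_le_one_of_sq. rewrite <- (Hunit q Hq).
    replace (U x q * U x q) with (U x q ^ 2) by ring.
    apply (term_le_rsum n (fun x => U x q ^ 2)); auto. intros; nra. }
  assert (Fu2 : forall x, (x < n)%nat -> Rabs (U x q) <= 2 * a x) by (intros; apply HUb; auto).
  assert (Fb : forall k, (k < n)%nat -> Rabs (b k) <= B).
  { intros. apply abs_le_sqrt_sum; auto. intros; apply pow2_ge_0. }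
  assert (FB2 : B ^ 2 = rsum n (fun k => b k ^ 2)).
  { apply pow2_sqrt. apply rsum_nonneg. intros; apply pow2_ge_0. }
  assert (FN : forall j k, a i * a j * a k <= N j k).
  { intros j k. unfold N, w32. fold a.
    rewrite <- (pow2_sqrt (a i)), <- (pow2_sqrt (a j)), <- (pow2_sqrt (a k)) at 1 by auto.
    replace (sqrt (a i) ^ 2 * sqrt (a j) ^ 2 * sqrt (a k) ^ 2) with
      (sqrt (a i) ^ 2 * sqrt (a j) ^ 2 * sqrt (a k) ^ 2) by ring.
    pose proof (AMGM3 (sqrt (a i)) (sqrt (a j)) (sqrt (a k)) (sqrt_pos _) (sqrt_pos _) (sqrt_pos _)).
    replace (sqrt (a i) ^ 3 * sqrt (a j) ^ 3 + sqrt (a j) ^ 3 * sqrt (a k) ^ 3 + sqrt (a k) ^ 3 * sqrt (a i) ^ 3)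
      with (sqrt (a i) ^ 3 * sqrt (a j) ^ 3 + sqrt (a j) ^ 3 * sqrt (a k) ^ 3 + sqrt (a k) ^ 3 * sqrt (a i) ^ 3) by ring.
    lra. }
  assert (Fc2 : forall j k, (j < n)%nat -> (k < n)%nat ->
     c j k ^ 2 <= 4 * (Ustar j q ^ 2 * b k ^ 2) * N j k).
  { intros j k Hj Hk.
    apply Rle_trans with (4 * (Ustar j q ^ 2 * b k ^ 2) * (a i * a j * a k)).
    2:{ apply Rmult_le_compat_l; auto. pose proof (pow2_ge_0 (Ustar j q)); pose proof (pow2_ge_0 (b k)). nra. }
    unfold c; cbv beta.
    replace ((Ustar i q * U j q * Ustar j q * U k q * b k) ^ 2) with
      (Rabs (Ustar i q) ^ 2 * Rabs (U j q) ^ 2 * Rabs (U k q) ^ 2 * (Ustar j q ^ 2 * b k ^ 2))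
      by (rewrite !pow2_abs; ring).
    assert (H1 : Rabs (Ustar i q) ^ 2 <= a i).
    { pose proof (Fa1 i); pose proof (Fs1 i Hi); pose proof (Rabs_pos (Ustar i q)). nra. }
    assert (H2 : Rabs (U j q) ^ 2 <= 2 * a j).
    { pose proof (Fu1 j Hj); pose proof (Fu2 j Hj); pose proof (Rabs_pos (U j q)). nra. }
    assert (H3 : Rabs (U k q) ^ 2 <= 2 * a k).
    { pose proof (Fu1 k Hk); pose proof (Fu2 k Hk); pose proof (Rabs_pos (U k q)). nra. }
    pose proof (pow2_ge_0 (Ustar j q)); pose proof (pow2_ge_0 (b k)).
    pose proof (pow2_ge_0 (Rabs (Ustar i q))); pose proof (pow2_ge_0 (Rabs (U j q))); pose proof (pow2_ge_0 (Rabs (U k q))).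
    set (X := Ustar j q ^ 2 * b k ^ 2) in *. assert (0 <= X) by (unfold X; nra).
    apply Rle_trans with (a i * (2 * a j) * (2 * a k) * X).
    - apply Rmult_le_compat_r; auto. apply Rmult_le_compat; try nra.
    - pose proof (Fa0 i); pose proof (Fa0 j); pose proof (Fa0 k). nra. }
  assert (Fc1 : forall j k, (j < n)%nat -> (k < n)%nat ->
     Rabs (c j k) <= 4 * (a i * a j * a k) * Rabs (b k)).
  { intros j k Hj Hk. unfold c; cbv beta. rewrite !Rabs_mult.
    pose proof (Fa1 i); pose proof (Fs1 j Hj); pose proof (Fu2 j Hj); pose proof (Fu2 k Hk).
    pose proof (Rabs_pos (Ustar i q)); pose proof (Rabs_pos (U j q)); pose proof (Rabs_pos (Ustar j q));
    pose proof (Rabs_pos (U k q)); pose proof (Rabs_pos (b k)).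
    apply Rle_trans with (a i * (2 * a j) * 1 * (2 * a k) * Rabs (b k)).
    - apply Rmult_le_compat_r; auto.
      assert (A1 : Rabs (Ustar i q) * Rabs (U j q) <= a i * (2 * a j)) by (apply Rmult_le_compat; auto).
      assert (A2 : Rabs (Ustar i q) * Rabs (U j q) * Rabs (Ustar j q) <= a i * (2 * a j) * 1)
        by (apply Rmult_le_compat; auto; apply Rmult_le_pos; auto).
      apply Rmult_le_compat; auto. repeat apply Rmult_le_pos; auto.
    - right; ring. }
  assert (Fw0 : forall x, 0 <= w32 r Ustar x) by (intros; unfold w32; apply pow_le; apply sqrt_pos).
  assert (FS : 0 < S).
  { destruct (rsum_exists n (fun x => Ustar x q * Ustar x q)) as [x [Hx Hne]]. lra.
    assert (Hax : 0 < a x).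
    { pose proof (Fa1 x). assert (Ustar x q <> 0) by (intro E; apply Hne; rewrite E; ring).
      pose proof (Rabs_pos_lt _ H0). lra. }
    apply Rlt_le_trans with (w32 r Ustar x).
    - unfold w32. apply pow_lt. apply sqrt_lt_R0. auto.
    - unfold S, Sconst. apply (term_le_rsum n (fun x => w32 r Ustar x)); auto. }
  assert (Fn1 : 1 <= INR n) by (apply (le_INR 1); lia).
  assert (FL : 0 <= L).
  { unfold L. destruct (Nat.eq_dec n 1) as [E|E].
    - rewrite E; simpl; rewrite ln_1; lra.
    - left. rewrite <- ln_1. apply ln_increasing; try lra. apply lt_1_INR; lia. }
  assert (Fg2 : 0 < gamma ^ 2) by (apply pow_lt; lra).
  assert (FK : 0 < 1056 / gamma ^ 2) by (apply Rdiv_lt_0_compat; lra).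
  assert (Fm0 : 0 <= m).
  { assert (0 <= 1056 / gamma ^ 2 * INR n * L * S ^ 2); [|lra].
    repeat apply Rmult_le_pos; try lra. }
  set (D := 3 * INR n * S ^ 2).
  assert (FD : 0 < D) by (unfold D; assert (0 < S^2) by (apply pow_lt; lra); nra).
  assert (Fp : forall j k, p_ijk n r Ustar i j k = N j k / D) by (intros; reflexivity).
  assert (FN0 : forall j k, 0 <= N j k) by (intros; unfold N; pose proof (Fw0 i); pose proof (Fw0 j); pose proof (Fw0 k); nra).
  assert (Fph : forall x y z, 0 <= ph x y z <= 1).
  { intros x y z. unfold ph, phat. split; [|apply Rmin_r].
    unfold Rmin; destruct Rle_dec; [|lra]. apply Rmult_le_pos; auto. unfold p_ijk.
    apply Rle_mult_inv_pos; [|exact FD].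
    pose proof (Fw0 x); pose proof (Fw0 y); pose proof (Fw0 z); nra. }
  destruct (Nat.eq_dec n 1) as [En|En].
  { assert (E1 : 1 - / INR n ^ 10 = 0) by (rewrite En; simpl; field).
    rewrite E1. unfold bern_prob_le. apply Rle_ge.
    rewrite <- (bern_const (phat n r Ustar m) (coords n) 0 (fun _ _ _ => false)) at 1.
    apply bern_mono. exact Fph. intros d. destruct Rle_dec; lra. }
  assert (FLp : 0 < L).
  { unfold L. rewrite <- ln_1. apply ln_increasing; try lra. apply lt_1_INR; lia. }
  assert (Fmp : 0 < m).
  { assert (0 < 1056 / gamma ^ 2 * INR n * L * S ^ 2); [|lra].
    repeat apply Rmult_lt_0_compat; try lra. }
  assert (Fph0 : forall j k, (j < n)%nat -> (k < n)%nat -> ph i j k = 0 -> c j k = 0).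
  { intros j k Hj Hk H0. unfold ph, phat in H0. rewrite Fp in H0.
    unfold Rmin in H0. destruct Rle_dec; [|lra].
    assert (HN : N j k = 0).
    { assert (N j k / D = 0).
      { destruct (Rmult_integral _ _ H0); lra. }
      unfold Rdiv in H. destruct (Rmult_integral _ _ H); auto.
      exfalso. pose proof (Rinv_0_lt_compat _ FD). lra. }
    pose proof (FN j k). pose proof (Fa0 i); pose proof (Fa0 j); pose proof (Fa0 k).
    assert (HP : a i * a j * a k = 0) by (assert (0 <= a i * a j * a k) by (repeat apply Rmult_le_pos; auto); lra).
    pose proof (Fc1 j k Hj Hk) as Hc. rewrite HP in Hc. pose proof (Rabs_pos (c j k)).
    destruct (Req_dec (c j k) 0); auto. pose proof (Rabs_pos_lt _ H5). lra. }
  assert (Fphp : forall j k, (j < n)%nat -> (k < n)%nat -> 0 < ph i j k < 1 ->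
            1056 * L * N j k <= ph i j k * (3 * gamma ^ 2)).
  { intros j k Hj Hk H0. unfold ph, phat in *. rewrite Fp in *.
    unfold Rmin in *. destruct Rle_dec; [|lra].
    assert (E : m * (N j k / D) * (3 * gamma ^ 2) - 1056 * L * N j k
               = N j k * (3 * gamma ^ 2) / D * (m - 1056 / gamma ^ 2 * INR n * L * S ^ 2)).
    { unfold D. field. split; lra. }
    assert (0 <= N j k * (3 * gamma ^ 2) / D * (m - 1056 / gamma ^ 2 * INR n * L * S ^ 2)).
    { apply Rmult_le_pos; [|lra]. apply Rle_mult_inv_pos; auto. pose proof (FN0 j k); nra. }
    lra. }
  set (Y := fun j k v => (b2R v * Wt n r Ustar m i j k - 1) * c j k).
  set (Z := fun d : config => rsum n (fun j => rsum n (fun k => Y j k (d i j k)))).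
  set (t := gamma * B).
  unfold bern_prob_le.
  rewrite (bern_ext _ _ _ (fun d => if Rle_dec (Rabs (Z d)) t then 1 else 0)).
  2:{ intros d. unfold t, B. replace (rsum n (fun j => rsum n (fun k =>
                   b2R (d i j k) * Wt n r Ustar m i j k
                   * Ustar i q * U j q * Ustar j q * U k q * b k))
               - Ustar i q * rsum n (fun a => U a q * Ustar a q)
                           * rsum n (fun a => U a q * b a)) with (Z d); auto.
      rewrite Rmult_assoc, rsum_mul, rsum_scal, rsum_minus. unfold Z. apply rsum_ext. intros j Hj.
      rewrite rsum_scal, rsum_minus. apply rsum_ext. intros k Hk. unfold Y, c. ring. }
  assert (Fpow : 0 < / INR n ^ 10) by (apply Rinv_0_lt_compat; apply pow_lt; lra).
  destruct (Req_dec B 0) as [HB0|HB0].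
  { assert (Hb0 : forall k, (k < n)%nat -> b k = 0).
    { intros k Hk. pose proof (Fb k Hk). rewrite HB0 in H. pose proof (Rabs_pos (b k)).
      destruct (Req_dec (b k) 0); auto. pose proof (Rabs_pos_lt _ H1). lra. }
    rewrite (bern_ext _ _ _ (fun _ => 1)). rewrite bern_const. lra.
    intros d. assert (Z d = 0).
    { unfold Z. rewrite <- (rsum_zero n). apply rsum_ext. intros j Hj. rewrite <- (rsum_zero n).
      apply rsum_ext. intros k Hk. unfold Y, c. rewrite Hb0 by auto. ring. }
    rewrite H. unfold t. rewrite HB0, Rabs_R0. destruct Rle_dec; lra. }
  assert (FBp : 0 < B) by (pose proof (sqrt_pos (rsum n (fun k => b k ^ 2))); unfold B, vnorm in *; lra).
  set (lam := 22 * L / (gamma * B)).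
  assert (Flam : lam * (gamma * B) = 22 * L) by (unfold lam; field; lra).
  assert (Flam0 : 0 < lam) by (unfold lam; apply Rdiv_lt_0_compat; nra).
  set (K := 12 * gamma ^ 2 / (1056 * L)).
  assert (FK0 : 0 < K) by (unfold K; apply Rdiv_lt_0_compat; lra).
  assert (FKL : K * (1056 * L) = 12 * gamma ^ 2) by (unfold K; field; lra).
  assert (Hterm : forall j k, (j < n)%nat -> (k < n)%nat ->
     c j k ^ 2 * Wt n r Ustar m i j k * (1 - ph i j k) <= K * (Ustar j q ^ 2 * b k ^ 2)).
  { intros j k Hj Hk. pose proof (Fph i j k) as Hp.
    assert (HX : 0 <= K * (Ustar j q ^ 2 * b k ^ 2)).
    { pose proof (pow2_ge_0 (Ustar j q)); pose proof (pow2_ge_0 (b k)). apply Rmult_le_pos; nra. }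
    unfold Wt. fold (ph i j k). destruct (Rlt_dec 0 (ph i j k)) as [H0|H0].
    - destruct (Req_dec (ph i j k) 1) as [E|E].
      + rewrite E. lra.
      + assert (Hl : 0 < ph i j k < 1) by lra.
        pose proof (Fphp j k Hj Hk Hl). pose proof (Fc2 j k Hj Hk).
        pose proof (pow2_ge_0 (Ustar j q)); pose proof (pow2_ge_0 (b k)).
        set (X := Ustar j q ^ 2 * b k ^ 2) in *. assert (0 <= X) by (unfold X; nra).
        assert (Hc : c j k ^ 2 <= K * X * ph i j k).
        { assert (c j k ^ 2 * (1056 * L) <= K * X * ph i j k * (1056 * L)); [|nra].
          replace (K * X * ph i j k * (1056 * L)) with (4 * X * (ph i j k * (3 * gamma ^ 2))).
          2:{ transitivity (X * ph i j k * (K * (1056 * L))); [|ring]. rewrite FKL. ring. }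
          pose proof (FN0 j k). nra. }
        assert (Hinv : 0 < / ph i j k) by (apply Rinv_0_lt_compat; lra).
        assert (E2 : c j k ^ 2 * / ph i j k * ph i j k = c j k ^ 2) by (field; lra).
        assert (c j k ^ 2 * / ph i j k <= K * X).
        { apply Rmult_le_reg_r with (ph i j k); [lra|]. rewrite E2. lra. }
        pose proof (pow2_ge_0 (c j k)).
        assert (0 <= c j k ^ 2 * / ph i j k) by (apply Rmult_le_pos; lra). nra.
    - lra. }
  assert (Hmom : forall s, Rabs s = lam ->
     bern_expect ph (coords n) (fun d => exp (s * Z d)) (fun _ _ _ => false) <= exp (11 * L)).
  { intros s Hs.
    eapply Rle_trans.
    { apply (expmom n i ph Y (fun j k => 2 * s ^ 2 * (c j k ^ 2 * Wt n r Ustar m i j k * (1 - ph i j k))) s Hi Fph).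
      intros j k Hj Hk. unfold Y. apply coord_bound.
      - apply Fph.
      - reflexivity.
      - apply Fph0; auto.
      - intros Hl. pose proof (Fphp j k Hj Hk Hl). rewrite Rabs_mult, Hs.
        pose proof (Fc1 j k Hj Hk). pose proof (Fb k Hk). pose proof (FN j k).
        pose proof (Fa0 i); pose proof (Fa0 j); pose proof (Fa0 k). pose proof (Rabs_pos (b k)).
        assert (0 <= a i * a j * a k) by (repeat apply Rmult_le_pos; auto).
        assert (Hc : Rabs (c j k) <= 4 * N j k * B).
        { apply Rle_trans with (4 * (a i * a j * a k) * Rabs (b k)); auto.
          apply Rmult_le_compat; nra. }
        assert (H8 : lam * Rabs (c j k) * gamma <= lam * (4 * N j k * B) * gamma).
        { apply Rmult_le_compat_r; [lra|]. apply Rmult_le_compat_l; lra. }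
        replace (lam * (4 * N j k * B) * gamma) with (4 * N j k * (lam * (gamma * B))) in H8 by ring.
        rewrite Flam in H8.
        apply Rmult_le_reg_r with gamma; [lra|].
        assert (Hg2 : gamma ^ 2 <= gamma) by nra.
        assert (88 * (L * N j k) <= ph i j k * gamma ^ 2 / 4) by lra.
        assert (ph i j k * gamma ^ 2 <= ph i j k * gamma) by (apply Rmult_le_compat_l; lra).
        assert (0 <= ph i j k * gamma) by nra. lra. }
    apply exp_le'.
    apply Rle_trans with (rsum n (fun j => rsum n (fun k => 2 * lam ^ 2 * K * (Ustar j q ^ 2 * b k ^ 2)))).
    { apply rsum_le. intros j Hj. apply rsum_le. intros k Hk.
      rewrite <- (pow2_abs s), Hs. pose proof (Hterm j k Hj Hk).
      assert (0 <= 2 * lam ^ 2) by (pose proof (pow2_ge_0 lam); lra). nra. }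
    rewrite (rsum_ext n _ (fun j => (2 * lam ^ 2 * K * Ustar j q ^ 2) * rsum n (fun k => b k ^ 2))).
    2:{ intros j Hj. rewrite rsum_scal. apply rsum_ext. intros. ring. }
    rewrite <- FB2.
    rewrite (rsum_ext n _ (fun j => (2 * lam ^ 2 * K * B ^ 2) * (Ustar j q * Ustar j q))) by (intros; ring).
    rewrite <- rsum_scal, Fcol.
    replace (2 * lam ^ 2 * K * B ^ 2 * 1) with (2 * K * (lam * (gamma * B)) ^ 2 / gamma ^ 2) by (field; lra).
    rewrite Flam. right. unfold K. field. split; lra. }
  set (e := exp (- (lam * t))).
  assert (Fe : 0 < e) by apply exp_pos.
  assert (Hind : forall d, 1 + (- e) * exp (lam * Z d) + (- e) * exp ((- lam) * Z d)
                    <= (if Rle_dec (Rabs (Z d)) t then 1 else 0)).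
  { intros d. pose proof (exp_pos (lam * Z d)); pose proof (exp_pos ((- lam) * Z d)).
    assert (0 < e * exp (lam * Z d)) by (apply Rmult_lt_0_compat; auto).
    assert (0 < e * exp ((- lam) * Z d)) by (apply Rmult_lt_0_compat; auto).
    destruct Rle_dec as [HH|HH]. lra.
    apply Rnot_le_lt in HH. unfold Rabs in HH. destruct Rcase_abs in HH.
    - assert (E : e * exp ((- lam) * Z d) = exp ((- lam) * Z d - lam * t)).
      { unfold e. rewrite <- exp_plus. f_equal; ring. }
      pose proof (exp_ineq1_le ((- lam) * Z d - lam * t)).
      assert (0 < (- lam) * Z d - lam * t) by nra. lra.
    - assert (E : e * exp (lam * Z d) = exp (lam * Z d - lam * t)).
      { unfold e. rewrite <- exp_plus. f_equal; ring. }
      pose proof (exp_ineq1_le (lam * Z d - lam * t)).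
      assert (0 < lam * Z d - lam * t) by nra. lra. }
  apply Rle_ge. eapply Rle_trans; [| apply bern_mono; [exact Fph | exact Hind]].
  rewrite bern_lin.
  pose proof (Hmom lam) as M1. pose proof (Hmom (- lam)) as M2.
  assert (A1 : Rabs lam = lam) by (apply Rabs_right; lra).
  assert (A2 : Rabs (- lam) = lam) by (rewrite Rabs_Ropp; auto).
  specialize (M1 A1). specialize (M2 A2).
  assert (Ee : e * exp (11 * L) = / INR n ^ 11).
  { unfold e. rewrite <- exp_plus. replace (- (lam * t) + 11 * L) with (- (INR 11 * ln (INR n))).
    2:{ unfold t. rewrite Flam. unfold L. simpl INR. ring. }
    rewrite exp_Ropp. f_equal. fold (Rpower (INR n) (INR 11)). apply Rpower_pow. lra. }
  assert (Fn2 : 2 <= INR n) by (apply (le_INR 2); lia).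
  assert (Epow : / INR n ^ 11 = / INR n ^ 10 * / INR n) by (simpl; field; lra).
  assert (2 * / INR n <= 1).
  { apply Rmult_le_reg_r with (INR n); [lra|]. rewrite Rmult_assoc, Rinv_l by lra. lra. }
  assert (e * bern_expect ph (coords n) (fun d : config => exp (lam * Z d)) (fun _ _ _ => false)
          <= / INR n ^ 11) by (rewrite <- Ee; apply Rmult_le_compat_l; lra).
  assert (e * bern_expect ph (coords n) (fun d : config => exp (- lam * Z d)) (fun _ _ _ => false)
          <= / INR n ^ 11) by (rewrite <- Ee; apply Rmult_le_compat_l; lra).
  assert (/ INR n ^ 10 * / INR n * 2 <= / INR n ^ 10) by nra.
  lra.
Qed.
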